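(* Let $G=(V,E,w)$ be a graph with $V\neq\emptyset$, positive vertex weights and maximum degree $\Delta\ge1$. Let $1\le\alpha\le\Delta$ and $\gamma=\lceil\sqrt{2\Delta\alpha}\,\rceil$, and suppose $G$ is a $\gamma$-stable instance of \texttt{MIS} with maximum weight independent set $I^*$. If $I'$ is an independent set of $G$ with $w(I')\ge w(I^* )/\alpha$, then $I^*\cap I'\neq\emptyset$.
   Context: \texttt{MIS}: given a graph $G=(V,E)$ with weights $w:V\to\mathbb{R}_{>0}$, find an independent set maximizing $w(I)=\sum_{u\in I}w_u$; $w(X)=\sum_{u\in X}w_u$. For $\gamma\ge1$, a $\gamma$-perturbation of $w$ is any $w'$ with $w_u\le w'_u\le\gamma w_u$ for all $u$. The instance is $\gamma$-stable if it has a unique maximum weight independent set $I^*$ and $I^*$ remains the unique maximum weight independent set under every $\gamma$-perturbation of $w$. *)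

(* Defs.v *)
From HB Require Import structures.
From mathcomp Require Import all_boot all_order all_algebra.
Set Implicit Arguments. Unset Strict Implicit. Unset Printing Implicit Defensive.
Import Order.TTheory GRing.Theory Num.Theory.
Local Open Scope ring_scope.

Definition simple_graph (T : finType) (e : rel T) : Prop :=
  (forall u v, e u v = e v u) /\ (forall u, ~~ e u u).

Definition deg (T : finType) (e : rel T) (u : T) : nat := #|[set v | e u v]|.
Definition maxdeg (T : finType) (e : rel T) : nat := (\max_(u : T) deg e u)%N.

Definition independent (T : finType) (e : rel T) (I : {set T}) : bool :=
  [forall u in I, forall v in I, ~~ e u v].

Definition wsum (R : numDomainType) (T : finType) (w : T -> R) (X : {set T}) : R :=
  \sum_(u in X) w u.

Definition unique_MWIS (R : numDomainType) (T : finType) (e : rel T) (w : T -> R)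
  (I : {set T}) : Prop :=
  independent e I /\
  forall J : {set T}, independent e J -> J != I -> wsum w J < wsum w I.

Definition perturbation (R : numDomainType) (T : finType) (g : R) (w w' : T -> R) : Prop :=
  forall u, w u <= w' u <= g * w u.

Definition stable (R : numDomainType) (T : finType) (e : rel T) (w : T -> R)
  (g : R) (Istar : {set T}) : Prop :=
  unique_MWIS e w Istar /\
  forall w' : T -> R, perturbation g w w' -> unique_MWIS e w' Istar.

(* Main.v *)
Require Import Defs.
From HB Require Import structures.
From mathcomp Require Import all_boot all_order all_algebra.
Import Order.TTheory GRing.Theory Num.Theory.
Local Open Scope ring_scope.

Theorem mainTheorem6 (R : archiRcfType) (T : finType) (e : rel T) (w : T -> R)
  (alpha : R) (Istar I' : {set T}) :
  simple_graph e ->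
  (0 < #|T|)%N ->
  (forall u, 0 < w u) ->
  (1 <= maxdeg e)%N ->
  1 <= alpha -> alpha <= (maxdeg e)%:R ->
  stable e w ((Num.ceil (Num.sqrt (2 * (maxdeg e)%:R * alpha)))%:~R) Istar ->
  independent e I' ->
  wsum w Istar / alpha <= wsum w I' ->
  Istar :&: I' != set0.
Proof.
move=> [esym eirr] T0 wpos D1 a1 aD [[indS uniqS] stab] indI' hw.
set g : R := (Num.ceil _)%:~R in stab.
have a0 : 0 < alpha by apply: lt_le_trans a1.
have ga : alpha <= g.
  apply: le_trans (ceil_ge _).
  have h : Num.sqrt (alpha ^+ 2) <= Num.sqrt (2 * (maxdeg e)%:R * alpha).
    apply: ler_wsqrtr; rewrite expr2 ler_pM2r //.
    apply: le_trans aD _; rewrite ler_peMl //.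
    by rewrite (ler_nat R 1 2).
  by move: h; rewrite sqrtr_sqr ger0_norm // ltW.
have g1 : 1 <= g by apply: le_trans ga.
have wS0 : 0 <= wsum w Istar by apply: sumr_ge0 => u _; apply: ltW.
have [EI|NI] := eqVneq I' Istar.
  rewrite EI setIid; apply/negP => /eqP S0.
  case: (pickP T) => [u _|none]; last by move: T0; rewrite (eq_card0 none).
  have := uniqS [set u].
  have indu : independent e [set u].
    by apply/forallP => x; apply/implyP; rewrite inE => /eqP ->;
       apply/forallP => y; apply/implyP; rewrite inE => /eqP ->.
  rewrite S0 => /(_ indu); have nu : [set u] != set0 by apply/set0Pn; exists u; rewrite inE.
  move=> /(_ nu).
  by rewrite /wsum big_set0 big_set1 ltNge ltW.
apply/negP => /eqP dis.
pose w' := fun u => if u \in I' then g * w u else w u.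
have pert : perturbation g w w'.
  move=> u; rewrite /w'; case: (u \in I').
    by rewrite lexx andbT ler_peMl // ltW.
  by rewrite lexx ler_peMl // ltW.
have [_ /(_ I' indI' NI)] := stab w' pert.
have -> : wsum w' I' = g * wsum w I'.
  by rewrite /wsum mulr_sumr; apply: eq_bigr => u uI; rewrite /w' uI.
have -> : wsum w' Istar = wsum w Istar.
  rewrite /wsum; apply: eq_bigr => u uS; rewrite /w'.
  case: ifP => // uI; have : u \in Istar :&: I' by rewrite inE uS uI.
  by rewrite dis inE.
apply/negP; rewrite -leNgt.
apply: le_trans (_ : g * (wsum w Istar / alpha) <= _); last first.
  by rewrite ler_pM2l ?(lt_le_trans ltr01).
rewrite mulrA ler_pdivlMr // mulrC.
exact: ler_wpM2r.
Qed.
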